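(* Both pairs $(T_n,T_L)$ and $(T_L',T_n')$ satisfy the rearrangement inequality and the dual rearrangement inequality.
   Context: Here $T_n(x,y)=\min(x,y)$ if $x+y>1$ and $0$ otherwise (nilpotent minimum); $T_L(x,y)=\max(x+y-1,0)$ (Łukasiewicz $T$-norm); $T_L'(x,y)=\min(x+y,1)$ (bounded sum); $T_n'(x,y)=\max(x,y)$ if $x+y<1$ and $1$ otherwise (nilpotent maximum); all are functions $[0,1]^2\to[0,1]$ and are commutative, associative, monotone uninorms. For such a pair $(\otimes,\oplus)$ (first component $\otimes$, second $\oplus$), it satisfies the rearrangement inequality if for every $n\geq1$, all $0\leq x_1\leq\cdots\leq x_n\leq 1$, $0\leq y_1\leq\cdots\leq y_n\leq 1$ and every permutation $\sigma$ of $\{1,\dots,n\}$, $$(x_n\otimes y_1)\oplus\cdots\oplus(x_1\otimes y_n)\leq (x_{\sigma(1)}\otimes y_1)\oplus\cdots\oplus(x_{\sigma(n)}\otimes y_n)\leq (x_1\otimes y_1)\oplus\cdots\oplus(x_n\otimes y_n),$$ and the dual rearrangement inequality if for all such data $$(x_n\oplus y_1)\otimes\cdots\otimes(x_1\oplus y_n)\geq (x_{\sigma(1)}\oplus y_1)\otimes\cdots\otimes(x_{\sigma(n)}\oplus y_n)\geq (x_1\oplus y_1)\otimes\cdots\otimes(x_n\oplus y_n).$$ *)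

(* Defs.v *)
From HB Require Import structures.
From mathcomp Require Import all_boot all_order all_algebra all_fingroup.
Set Implicit Arguments. Unset Strict Implicit. Unset Printing Implicit Defensive.
Import Order.TTheory GRing.Theory Num.Theory.
Local Open Scope ring_scope.

(* All operations are functions R -> R -> R; they are only ever applied
   to arguments in [0,1] (where they take values in [0,1]). *)

Definition Tn {R : realFieldType} (x y : R) : R :=
  if 1 < x + y then Num.min x y else 0.
Definition TL {R : realFieldType} (x y : R) : R := Num.max (x + y - 1) 0.
Definition TL' {R : realFieldType} (x y : R) : R := Num.min (x + y) 1.
Definition Tn' {R : realFieldType} (x y : R) : R :=
  if x + y < 1 then Num.max x y else 1.

Fixpoint iop {R : Type} (op : R -> R -> R) (f : nat -> R) (k : nat) : R :=
  match k with
  | 0 => f 0%N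
  | k'.+1 => op (iop op f k') (f k'.+1)
  end.

Definition bigop1 {R : Type} (op : R -> R -> R) (n : nat) (g : 'I_n.+1 -> R) : R :=
  iop op (fun i => g (inord i)) n.

Definition in01 {R : realFieldType} (x : R) := 0 <= x <= 1.

(* data: x_1 <= ... <= x_m, y_1 <= ... <= y_m in [0,1], m = n+1 >= 1,
   indexed 0..n; rev_ord i is the index m+1-i (in 1-based numbering). *)
Definition sorted01 {R : realFieldType} (n : nat) (x : 'I_n.+1 -> R) :=
  (forall i, in01 (x i)) /\ (forall i j : 'I_n.+1, (i <= j)%N -> x i <= x j).

Definition rearrangement_ineq {R : realFieldType} (otimes oplus : R -> R -> R) : Prop :=
  forall (n : nat) (x y : 'I_n.+1 -> R) (s : 'S_n.+1),
    sorted01 x -> sorted01 y ->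
    bigop1 oplus (fun i => otimes (x (rev_ord i)) (y i))
      <= bigop1 oplus (fun i => otimes (x (s i)) (y i))
    /\ bigop1 oplus (fun i => otimes (x (s i)) (y i))
      <= bigop1 oplus (fun i => otimes (x i) (y i)).

Definition dual_rearrangement_ineq {R : realFieldType} (otimes oplus : R -> R -> R) : Prop :=
  forall (n : nat) (x y : 'I_n.+1 -> R) (s : 'S_n.+1),
    sorted01 x -> sorted01 y ->
    bigop1 otimes (fun i => oplus (x (rev_ord i)) (y i))
      >= bigop1 otimes (fun i => oplus (x (s i)) (y i))
    /\ bigop1 otimes (fun i => oplus (x (s i)) (y i))
      >= bigop1 otimes (fun i => oplus (x i) (y i)).

(* Main.v *)
Require Import Defs.
From HB Require Import structures.
From mathcomp Require Import all_boot all_order all_algebra all_fingroup.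
From mathcomp Require Import lra.
Set Implicit Arguments. Unset Strict Implicit. Unset Printing Implicit Defensive.
Import Order.TTheory GRing.Theory Num.Theory.

Lemma rearr_gen (T : Type) (idx : T) (op : Monoid.com_law idx) (le : rel T)
  (n : nat) (H : 'I_n.+1 -> 'I_n.+1 -> T) :
  reflexive le -> transitive le -> (forall a b c, le b c -> le (op a b) (op a c)) ->
  (forall p q k m : 'I_n.+1, (p <= q)%N -> (k <= m)%N ->
     le (op (H p m) (H q k)) (op (H p k) (H q m))) ->
  forall s : 'S_n.+1, le (\big[op/idx]_i H (s i) i) (\big[op/idx]_i H i i).
Proof.
move=> lr lt mono cond.
suff: forall N (s : 'S_n.+1), #|[pred i | s i != i]| <= N ->
   le (\big[op/idx]_i H (s i) i) (\big[op/idx]_i H i i).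
  by move=> h s; exact: (h _ s (leqnn _)).
elim=> [|N IH] s hs; (have [/forallP fx|nfx] := boolP [forall i, s i == i];
  [by rewrite (eq_bigr (fun i => H i i)) // => i _; rewrite (eqP (fx i)) | ]).
- have [i hi] : exists i, s i != i.
    by move: nfx; rewrite negb_forall => /existsP.
  have : 0 < #|[pred i | s i != i]| by apply/card_gt0P; exists i.
  by rewrite leqNgt in hs; rewrite (negbTE hs).
have [i0 hi0] : exists i, s i != i.
  by move: nfx; rewrite negb_forall => /existsP.
case: (@arg_maxnP _ i0 (fun i => s i != i) (fun i : 'I_n.+1 => val i) hi0) => m hm mmax.
pose k := (s^-1)%g m.
have skm : s k = m by rewrite /k permKV.
have hkm : k != m by apply: contraNneq hm => ekm; rewrite -{1}ekm skm.
have hkm' : (k <= m)%N by apply: mmax; rewrite skm eq_sym.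
have hsm : (s m <= m)%N.
  apply: mmax; apply: contraNneq hm => /perm_inj ->; by [].
pose s' := (tperm k m * s)%g.
have s'E : forall i, s' i = s (tperm k m i) by move=> i; rewrite permM.
have s'k : s' k = s m by rewrite s'E tpermL.
have s'm : s' m = m by rewrite s'E tpermR.
have s'o : forall i, i != k -> i != m -> s' i = s i.
  by move=> i h1 h2; rewrite s'E tpermD // eq_sym.
have hcount : #|[pred i | s' i != i]| <= N.
  have : #|[pred i | s' i != i]| <= #|[predD1 [pred i | s i != i] & m]|.
    apply: subset_leq_card; apply/subsetP => i /=; rewrite !inE.
    have [->|him] := eqVneq i m; first by rewrite s'm eqxx.
    have [->|hik] := eqVneq i k; first by move=> _; rewrite skm eq_sym hkm andbT.
    by rewrite s'o.
  move: hs; rewrite (cardD1 m) inE hm add1n ltnS => h1 h2.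
  exact: leq_trans h2 h1.
apply: lt (IH s' hcount).
have hmk : m != k by rewrite eq_sym.
rewrite (bigD1 k) //= (bigD1 m hmk) /=.
rewrite [X in le _ X](bigD1 k) //= (bigD1 m hmk) /=.
rewrite (eq_bigr (fun i => H (s' i) i)); last first.
  by move=> i /andP[h1 h2]; rewrite s'o.
rewrite skm s'k s'm.
set r := \big[op/idx]_(i | _) _.
have e : forall A B, op A (op B r) = op r (op A B).
  by move=> A B; rewrite SemiGroup.mulmA SemiGroup.mulmC.
rewrite !e; apply: mono; rewrite [op (H m k) _]SemiGroup.mulmC; exact: cond.
Qed.

Local Open Scope ring_scope.

Record gop (R : realFieldType) := GOp {
  gf : R -> R -> R; ge : R;
  ge01 : in01 ge;
  gcl : forall a b, in01 a -> in01 b -> in01 (gf a b);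
  gA : forall a b c, in01 a -> in01 b -> in01 c -> gf a (gf b c) = gf (gf a b) c;
  gC : forall a b, in01 a -> in01 b -> gf a b = gf b a;
  g1 : forall a, in01 a -> gf ge a = a;
  gmono : forall a b c, in01 a -> in01 b -> in01 c -> b <= c -> gf a b <= gf a c }.

Definition I01 (R : realFieldType) := {x : R | in01 x}.

Definition opS (R : realFieldType) (g : gop R) (a b : I01 R) : I01 R :=
  exist _ (gf g (val a) (val b)) (gcl g (valP a) (valP b)).
Definition eS (R : realFieldType) (g : gop R) : I01 R := exist _ (ge g) (ge01 g).

Lemma opS_A R (g : gop R) : associative (opS g).
Proof. by move=> a b c; apply: val_inj; rewrite /= gA //; apply: valP. Qed.
Lemma opS_C R (g : gop R) : commutative (opS g).
Proof. by move=> a b; apply: val_inj; rewrite /= gC //; apply: valP. Qed.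
Lemma opS_1 R (g : gop R) : left_id (eS g) (opS g).
Proof. by move=> a; apply: val_inj; rewrite /= g1 //; apply: valP. Qed.

HB.instance Definition _ R (g : gop R) :=
  Monoid.isComLaw.Build (I01 R) (eS g) (opS g) (@opS_A R g) (@opS_C R g) (@opS_1 R g).

Lemma iop_ext (T : Type) (op : T -> T -> T) f f' n :
  (forall i, (i <= n)%N -> f i = f' i) -> iop op f n = iop op f' n.
Proof.
elim: n => [|n IH] h /=; first exact: h.
by rewrite IH ?h // => i hi; apply: h; apply: leqW.
Qed.

Lemma iop_big R (g : gop R) (f : nat -> I01 R) n :
  iop (gf g) (fun i => val (f i)) n = val (\big[opS g/eS g]_(i < n.+1) f i).
Proof.
elim: n => [|n IH] /=; first by rewrite big_ord_recr big_ord0 /= g1 //; apply: valP.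
by rewrite big_ord_recr /= IH.
Qed.

Definition lift01 R (g : gop R) (r : R) : I01 R := insubd (eS g) r.

Lemma bigop1_big R (g : gop R) n (F : 'I_n.+1 -> R) :
  (forall i, in01 (F i)) ->
  bigop1 (gf g) F = val (\big[opS g/eS g]_(i < n.+1) lift01 g (F i)).
Proof.
move=> hF; rewrite /bigop1.
rewrite (@iop_ext _ (gf g) _ (fun i => val (lift01 g (F (inord i)))) n); last first.
  by move=> i _; rewrite /lift01 insubdK //; apply: hF.
rewrite iop_big; congr val; apply: eq_bigr => i _; by rewrite inord_val.
Qed.

Definition led (R : realFieldType) (dir : bool) (a b : R) := if dir then a <= b else b <= a.

Lemma master R (g : gop R) (h : R -> R -> R) (dir : bool) :
  (forall a b, in01 a -> in01 b -> in01 (h a b)) ->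
  (forall a b c d, in01 a -> in01 b -> in01 c -> in01 d -> a <= b -> c <= d ->
     led dir (gf g (h a d) (h b c)) (gf g (h a c) (h b d))) ->
  forall n (x y : 'I_n.+1 -> R) (s : 'S_n.+1), sorted01 x -> sorted01 y ->
   led dir (bigop1 (gf g) (fun i => h (x (rev_ord i)) (y i)))
           (bigop1 (gf g) (fun i => h (x (s i)) (y i))) /\
   led dir (bigop1 (gf g) (fun i => h (x (s i)) (y i)))
           (bigop1 (gf g) (fun i => h (x i) (y i))).
Proof.
move=> hcl basic n x y s [x01 xmon] [y01 ymon].
rewrite !bigop1_big; try by move=> i; apply: hcl.
have lv : forall p i, val (lift01 g (h (x p) (y i))) = h (x p) (y i).
  by move=> p i; rewrite /lift01 insubdK //; apply: hcl.
have mono : forall (d : bool) (a b c : I01 R),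
    led d (val b) (val c) -> led d (val (opS g a b)) (val (opS g a c)).
  move=> [] a b c /=; rewrite /led /= => hbc; apply: gmono => //; apply: valP.
have refl : forall d, reflexive (fun a b : I01 R => led d (val a) (val b)).
  by move=> [] a; rewrite /led.
have trans : forall d, transitive (fun a b : I01 R => led d (val a) (val b)).
  by move=> [] a b c; rewrite /led => h1 h2; [apply: le_trans h1 h2 | apply: le_trans h2 h1].
have ledN : forall d (a b : R), led (~~ d) a b = led d b a by case.
have h01 : forall p i, in01 (h (x p) (y i)) by move=> p i; apply: hcl.
split.
- pose r := perm (@rev_ord_inj n.+1).
  pose H' := fun p i => lift01 g (h (x (rev_ord p)) (y i)).
  have := @rearr_gen _ _ (opS g) (fun a b => led (~~ dir) (val a) (val b)) n H'
     (refl _) (trans _) (fun a b c => mono _ a b c) _ (s * r)%g.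
  rewrite /H' /=.
  rewrite (eq_bigr (fun i => lift01 g (h (x (s i)) (y i)))); last first.
    by move=> i _; rewrite permM permE rev_ordK.
  move=> hh; rewrite -ledN; apply: hh => p q k m hpq hkm.
  rewrite !lv ledN (gC g (h01 _ _) (h01 _ _)) [X in led _ _ X](gC g (h01 _ _) (h01 _ _)).
  apply: basic => //; try apply: x01; try apply: y01.
  - by apply: xmon; rewrite /= leq_sub2l.
  - exact: ymon.
- have := @rearr_gen _ _ (opS g) (fun a b => led dir (val a) (val b)) n
     (fun p i => lift01 g (h (x p) (y i)))
     (refl _) (trans _) (fun a b c => mono _ a b c) _ s.
  move=> hh; apply: hh => p q k m hpq hkm /=.
  rewrite !lv; apply: basic => //; try apply: x01; try apply: y01.
  - exact: xmon.
  - exact: ymon.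
Qed.

Ltac split_ifs := repeat match goal with
  | |- context [if ?b then _ else _] =>
    lazymatch b with context [if _ then _ else _] => fail | _ =>
    let h := fresh "h" in case: (boolP b) => h; [rewrite ?h | rewrite ?(negbTE h)] end
  end.
Ltac norm_hyps := repeat match goal with
  | H : is_true (~~ (_ < _)) |- _ => rewrite -leNgt in H
  | H : is_true (~~ (_ <= _)) |- _ => rewrite -ltNge in H
  end.
Ltac split_prune := repeat match goal with
  | |- context [if ?b then _ else _] =>
    lazymatch b with context [if _ then _ else _] => fail | _ =>
    let h := fresh "h" in case: (boolP b) => h; [rewrite ?h | rewrite ?(negbTE h)];
    norm_hyps; try (exfalso; lra) end
  end.
Ltac solve01p :=
  rewrite /in01 /Tn /TL /TL' /Tn' /led /Order.min /Order.max;
  repeat match goal with H : is_true (_ && _) |- _ => move/andP: H => [? ?] end;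
  split_prune; try (apply/andP; split); lra.
Ltac solve01 :=
  rewrite /in01 /Tn /TL /TL' /Tn' /led /Order.min /Order.max;
  repeat match goal with H : is_true (_ && _) |- _ => move/andP: H => [? ?] end;
  split_ifs; norm_hyps; try (apply/andP; split); lra.

Section Ops.
Variable R : realFieldType.
Implicit Types a b c d u v : R.

Lemma e1 : in01 (1 : R). Proof. by rewrite /in01 ler01 lexx. Qed.
Lemma e0 : in01 (0 : R). Proof. by rewrite /in01 ler01 lexx. Qed.

Lemma Tn_cl a b : in01 a -> in01 b -> in01 (Tn a b). Proof. rewrite /in01 => ? ?; solve01. Qed.
Lemma Tn_A a b c : in01 a -> in01 b -> in01 c -> Tn a (Tn b c) = Tn (Tn a b) c.
Proof. rewrite /in01 => ? ? ?; solve01. Qed.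
Lemma Tn_C a b : in01 a -> in01 b -> Tn a b = Tn b a. Proof. rewrite /in01 => ? ?; solve01. Qed.
Lemma Tn_1 a : in01 a -> Tn 1 a = a. Proof. rewrite /in01 => ?; solve01. Qed.
Lemma Tn_mono a b c : in01 a -> in01 b -> in01 c -> b <= c -> Tn a b <= Tn a c.
Proof. rewrite /in01 => ? ? ? ?; solve01. Qed.
Definition gTn := GOp e1 Tn_cl Tn_A Tn_C Tn_1 Tn_mono.

Lemma TL_cl a b : in01 a -> in01 b -> in01 (TL a b). Proof. rewrite /in01 => ? ?; solve01. Qed.
Lemma TL_A a b c : in01 a -> in01 b -> in01 c -> TL a (TL b c) = TL (TL a b) c.
Proof. rewrite /in01 => ? ? ?; solve01. Qed.
Lemma TL_C a b : in01 a -> in01 b -> TL a b = TL b a. Proof. rewrite /in01 => ? ?; solve01. Qed.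
Lemma TL_1 a : in01 a -> TL 1 a = a. Proof. rewrite /in01 => ?; solve01. Qed.
Lemma TL_mono a b c : in01 a -> in01 b -> in01 c -> b <= c -> TL a b <= TL a c.
Proof. rewrite /in01 => ? ? ? ?; solve01. Qed.
Definition gTL := GOp e1 TL_cl TL_A TL_C TL_1 TL_mono.

Lemma TLp_cl a b : in01 a -> in01 b -> in01 (TL' a b). Proof. rewrite /in01 => ? ?; solve01. Qed.
Lemma TLp_A a b c : in01 a -> in01 b -> in01 c -> TL' a (TL' b c) = TL' (TL' a b) c.
Proof. rewrite /in01 => ? ? ?; solve01. Qed.
Lemma TLp_C a b : in01 a -> in01 b -> TL' a b = TL' b a. Proof. rewrite /in01 => ? ?; solve01. Qed.
Lemma TLp_1 a : in01 a -> TL' 0 a = a. Proof. rewrite /in01 => ?; solve01. Qed.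
Lemma TLp_mono a b c : in01 a -> in01 b -> in01 c -> b <= c -> TL' a b <= TL' a c.
Proof. rewrite /in01 => ? ? ? ?; solve01. Qed.
Definition gTLp := GOp e0 TLp_cl TLp_A TLp_C TLp_1 TLp_mono.

Lemma Tnp_cl a b : in01 a -> in01 b -> in01 (Tn' a b). Proof. rewrite /in01 => ? ?; solve01. Qed.
Lemma Tnp_A a b c : in01 a -> in01 b -> in01 c -> Tn' a (Tn' b c) = Tn' (Tn' a b) c.
Proof. rewrite /in01 => ? ? ?; solve01. Qed.
Lemma Tnp_C a b : in01 a -> in01 b -> Tn' a b = Tn' b a. Proof. rewrite /in01 => ? ?; solve01. Qed.
Lemma Tnp_1 a : in01 a -> Tn' 0 a = a. Proof. rewrite /in01 => ?; solve01. Qed.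
Lemma Tnp_mono a b c : in01 a -> in01 b -> in01 c -> b <= c -> Tn' a b <= Tn' a c.
Proof. rewrite /in01 => ? ? ? ?; solve01. Qed.
Definition gTnp := GOp e0 Tnp_cl Tnp_A Tnp_C Tnp_1 Tnp_mono.


Lemma minl a b : Num.min a b <= a. Proof. solve01. Qed.
Lemma minr a b : Num.min a b <= b. Proof. solve01. Qed.
Lemma maxl a b : a <= Num.max a b. Proof. solve01. Qed.
Lemma maxr a b : b <= Num.max a b. Proof. solve01. Qed.
Lemma min_super a b c d : a <= b -> c <= d ->
  Num.min a d + Num.min b c <= Num.min a c + Num.min b d.
Proof. move=> ? ?; solve01. Qed.
Lemma max_sub a b c d : a <= b -> c <= d ->
  Num.max a c + Num.max b d <= Num.max a d + Num.max b c.
Proof. move=> ? ?; solve01. Qed.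
Lemma min_mono2 a b c d : a <= c -> b <= d -> Num.min a b <= Num.min c d.
Proof. move=> ? ?; solve01. Qed.
Lemma max_mono2 a b c d : a <= c -> b <= d -> Num.max a b <= Num.max c d.
Proof. move=> ? ?; solve01. Qed.

Lemma min_glb a c d : a <= c -> a <= d -> a <= Num.min c d.
Proof. move=> ? ?; solve01. Qed.
Lemma max_lub a c d : c <= a -> d <= a -> Num.max c d <= a.
Proof. move=> ? ?; solve01. Qed.

Lemma TL_ge0 u v : 0 <= TL u v. Proof. solve01. Qed.
Lemma TL_0 u v : u + v <= 1 -> TL u v = 0. Proof. move=> ?; solve01. Qed.
Lemma TL_pos u v : 1 <= u + v -> TL u v = u + v - 1. Proof. move=> ?; solve01. Qed.
Lemma Tn_ge0 u v : 0 <= u -> 0 <= v -> 0 <= Tn u v. Proof. move=> ? ?; solve01. Qed.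
Lemma Tn_0 u v : u + v <= 1 -> Tn u v = 0. Proof. move=> ?; solve01. Qed.
Lemma Tn_pos u v : 1 < u + v -> Tn u v = Num.min u v. Proof. move=> ?; solve01. Qed.
Lemma TLp_le1 u v : TL' u v <= 1. Proof. solve01. Qed.
Lemma TLp_one u v : 1 <= u + v -> TL' u v = 1. Proof. move=> ?; solve01. Qed.
Lemma TLp_lt u v : u + v <= 1 -> TL' u v = u + v. Proof. move=> ?; solve01. Qed.
Lemma Tnp_le1 u v : u <= 1 -> v <= 1 -> Tn' u v <= 1. Proof. move=> ? ?; solve01. Qed.
Lemma Tnp_one u v : 1 <= u + v -> Tn' u v = 1. Proof. move=> ?; solve01. Qed.
Lemma Tnp_lt u v : u + v < 1 -> Tn' u v = Num.max u v. Proof. move=> ?; solve01. Qed.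

Lemma basic1 a b c d : in01 a -> in01 b -> in01 c -> in01 d -> a <= b -> c <= d ->
  led true (TL (Tn a d) (Tn b c)) (TL (Tn a c) (Tn b d)).
Proof.
move=> ha hb hc hd hab hcd; rewrite /led.
have [h1|h1] := lerP (a + d) 1.
  rewrite (Tn_0 h1) TL_0 ?TL_ge0 //.
  by case/andP: (Tn_cl hb hc) => _ ?; rewrite add0r.
have [h2|h2] := lerP (b + c) 1.
  rewrite (Tn_0 h2) TL_0 ?TL_ge0 //.
  by case/andP: (Tn_cl ha hd) => _ ?; rewrite addr0.
rewrite (Tn_pos h1) (Tn_pos h2).
have [h3|h3] := lerP (Num.min a d + Num.min b c) 1; first by rewrite TL_0 ?TL_ge0.
have := minl a d; have := minr a d; have := minl b c; have := minr b c => m1 m2 m3 m4.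
have := min_super hab hcd => ms.
rewrite (@Tn_pos a c); last lra.
rewrite (@Tn_pos b d); last lra.
rewrite !TL_pos; lra.
Qed.

Lemma basic2 a b c d : in01 a -> in01 b -> in01 c -> in01 d -> a <= b -> c <= d ->
  led false (Tn (TL a d) (TL b c)) (Tn (TL a c) (TL b d)).
Proof.
move=> ha hb hc hd hab hcd; rewrite /led.
case/andP: (TL_cl ha hc) => u0 u1; case/andP: (TL_cl hb hd) => v0 v1.
have [h1|h1] := lerP (TL a c + TL b d) 1; first by rewrite Tn_0 // Tn_ge0 ?TL_ge0.
have [h2|h2] := lerP (a + c) 1; first by move: h1; rewrite (TL_0 h2); lra.
have [h3|h3] := lerP (b + d) 1; first by move: h1; rewrite (TL_0 h3); lra.
move: h1; rewrite (TL_pos (ltW h2)) (TL_pos (ltW h3)) => h1.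
rewrite (Tn_pos h1) (@TL_pos a d); last lra.
rewrite (@TL_pos b c); last lra.
rewrite Tn_pos; last lra.
apply: le_trans (minl _ _) _; apply: min_glb; lra.
Qed.

Lemma basic3 a b c d : in01 a -> in01 b -> in01 c -> in01 d -> a <= b -> c <= d ->
  led true (Tn' (TL' a d) (TL' b c)) (Tn' (TL' a c) (TL' b d)).
Proof.
move=> ha hb hc hd hab hcd; rewrite /led.
case/andP: (TLp_cl ha hc) => u0 u1; case/andP: (TLp_cl hb hd) => v0 v1.
have [h1|h1] := lerP 1 (TL' a c + TL' b d).
  by rewrite (Tnp_one h1) Tnp_le1 ?TLp_le1.
have [h2|h2] := lerP 1 (a + c); first by move: h1; rewrite (TLp_one h2); lra.
have [h3|h3] := lerP 1 (b + d); first by move: h1; rewrite (TLp_one h3); lra.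
move: h1; rewrite (TLp_lt (ltW h2)) (TLp_lt (ltW h3)) => h1.
rewrite (Tnp_lt h1) (@TLp_lt a d); last lra.
rewrite (@TLp_lt b c); last lra.
rewrite Tnp_lt; last lra.
apply: le_trans _ (maxr _ _); apply: max_lub; lra.
Qed.

Lemma basic4 a b c d : in01 a -> in01 b -> in01 c -> in01 d -> a <= b -> c <= d ->
  led false (TL' (Tn' a d) (Tn' b c)) (TL' (Tn' a c) (Tn' b d)).
Proof.
move=> ha hb hc hd hab hcd; rewrite /led.
have [h1|h1] := lerP 1 (Tn' a d + Tn' b c); first by rewrite (TLp_one h1) TLp_le1.
have [h2|h2] := lerP 1 (a + d).
  by move: h1; rewrite (Tnp_one h2); case/andP: (Tnp_cl hb hc); lra.
have [h3|h3] := lerP 1 (b + c).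
  by move: h1; rewrite (Tnp_one h3); case/andP: (Tnp_cl ha hd); lra.
move: h1; rewrite (Tnp_lt h2) (Tnp_lt h3) => h1.
have := maxl a d; have := maxr a d; have := maxl b c; have := maxr b c => m1 m2 m3 m4.
have := max_sub hab hcd => ms.
rewrite (TLp_lt (ltW h1)) (@Tnp_lt a c); last lra.
rewrite (@Tnp_lt b d); last lra.
rewrite TLp_lt; lra.
Qed.
End Ops.

Theorem theorem13 (R : realFieldType) :
  (rearrangement_ineq (@Tn R) (@TL R) /\ dual_rearrangement_ineq (@Tn R) (@TL R)) /\
  (rearrangement_ineq (@TL' R) (@Tn' R) /\ dual_rearrangement_ineq (@TL' R) (@Tn' R)).
Proof.
split; split => n x y s hx hy.
- exact: (@master R (gTL R) (@Tn R) true (@Tn_cl R) (@basic1 R) n x y s hx hy).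
- exact: (@master R (gTn R) (@TL R) false (@TL_cl R) (@basic2 R) n x y s hx hy).
- exact: (@master R (gTnp R) (@TL' R) true (@TLp_cl R) (@basic3 R) n x y s hx hy).
- exact: (@master R (gTLp R) (@Tn' R) false (@Tnp_cl R) (@basic4 R) n x y s hx hy).
Qed.
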